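(* For any integers $n\ge g\ge1$, $\Delta\big(\tfrac{R(g,n)}{n}\big)\le\tfrac gn$.
   Context: A set $S$ of integers is a $B^*[g]$ set if for every integer $m$ there are at most $g$ ordered pairs $(s_1,s_2)\in S\times S$ with $s_1+s_2=m$. $R(g,n)$ is the maximum cardinality of a $B^*[g]$ set contained in $\{1,2,\dots,n\}$. Let $\lambda$ be Lebesgue measure; a set $C\subseteq\mathbb{R}$ is symmetric if there is $c$ with $c+x\in C\iff c-x\in C$; $D(A):=\sup\{\lambda(C): C\subseteq A \text{ measurable and symmetric}\}$, and $\Delta(\varepsilon):=\inf\{D(A): A\subseteq[0,1) \text{ measurable},\ \lambda(A)=\varepsilon\}$ for $0\le\varepsilon\le1$. *)

(* Defs.v *)
From mathcomp Require Import all_boot all_order all_algebra.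
From mathcomp Require Import all_classical all_reals all_analysis.
Set Implicit Arguments. Unset Strict Implicit. Unset Printing Implicit Defensive.
Import Order.TTheory GRing.Theory Num.Theory.
Local Open Scope classical_set_scope.
Local Open Scope ring_scope.

(* B*[g] sets inside {1,...,n}: S is a subset of 'I_(n.+1) not containing 0. *)
Definition Bstar (g n : nat) (S : {set 'I_n.+1}) : Prop :=
  forall m : int,
    (#|[set p : 'I_n.+1 * 'I_n.+1 |
        [&& p.1 \in S, p.2 \in S & ((p.1 + p.2)%N%:Z == m)]]| <= g)%N.

Definition Rgn (g n : nat) : nat :=
  (\max_(S : {set 'I_n.+1} | `[< (ord0 \notin S) /\ Bstar g S >]) #|S|)%N.

Definition LebT (R : realType) := caratheodory_type ((@lebesgue_measure R)^*)%mu.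
Definition Lmeasurable (R : realType) (A : set R) : Prop :=
  measurable (A : set (LebT R)).
Definition lam (R : realType) (A : set R) : \bar R :=
  @completed_lebesgue_measure R (A : set (LebT R)).

Definition symmetric_set (R : realType) (C : set R) : Prop :=
  exists c : R, forall x : R, C (c + x) <-> C (c - x).

Definition Dsym (R : realType) (A : set R) : \bar R :=
  ereal_sup [set lam C | C in
     [set C : set R | [/\ Lmeasurable C, C `<=` A & symmetric_set C]]].

Definition Delta (R : realType) (eps : R) : \bar R :=
  ereal_inf [set Dsym A | A in
     [set A : set R | [/\ Lmeasurable A, A `<=` [set x | 0 <= x < 1]
                        & lam A = eps%:E]]].

(* Main.v *)
Require Import Defs.
From mathcomp Require Import all_boot all_order all_algebra.
From mathcomp Require Import all_classical all_reals all_analysis.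
From mathcomp Require Import lra zify.
Import Order.TTheory GRing.Theory Num.Theory.
Local Open Scope ring_scope.

Lemma in_bigsetU (T : Type) (I : finType) (F : I -> set T) (i : I) x :
  F i x -> (\big[setU/set0]_(j : I) F j) x.
Proof. by move=> Fx; rewrite (bigD1 i) //=; left. Qed.

Lemma bigsetU_in (T : Type) (I : finType) (F : I -> set T) x :
  (\big[setU/set0]_(j : I) F j) x -> exists i, F i x.
Proof.
apply: (big_ind (fun X : set T => X x -> exists i, F i x)) => //.
- by move=> X Y hX hY [/hX|/hY].
- by move=> i _ Fx; exists i.
Qed.
Lemma sum_ind_card (R : numDomainType) (T : finType) (P : pred T) :
  \sum_(p : T) ((P p)%:R : R) = #|[set p | P p]|%:R.
Proof.
rewrite -natr_sum; congr (_%:R).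
rewrite (eq_bigr (fun p => if P p then 1 else 0)%N); last by move=> p _; case: (P p).
by rewrite -big_mkcond /= sum1_card cardsE.
Qed.
Lemma card_cl (T : finType) (b : pred T) :
  #|[set p | b p]%classic| = #|[set p | b p]|.
Proof. apply: eq_card => x; rewrite inE /in_set /=; exact: asboolb. Qed.

Lemma comb (R : realFieldType) n g (S : {set 'I_n.+1}) (hB : Bstar g S) (k : int) (v : R)
  (v0 : 0 <= v) (v1 : v <= 1) (f : 'I_n.+1 -> 'I_n.+1 -> R)
  (hf : forall i j : 'I_n.+1, i \in S -> j \in S ->
     f i j <= (1 - v) * (((i + j)%N%:Z == k) : bool)%:R + v * (((i+j)%N%:Z == k+1) : bool)%:R) :
  \sum_(i < n.+1) \sum_(j < n.+1) (if (i \in S) && (j \in S) then f i j else 0) <= g%:R.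
Proof.
rewrite pair_bigA /=.
pose c m (p : 'I_n.+1 * 'I_n.+1) := [&& p.1 \in S, p.2 \in S & ((p.1 + p.2)%N%:Z == m)].
apply: (@le_trans _ _ (\sum_(p : 'I_n.+1 * 'I_n.+1) ((1 - v) * (c k p)%:R + v * (c (k+1) p)%:R))).
  apply: ler_sum => p _; rewrite /c.
  case h1: (p.1 \in S); case h2: (p.2 \in S) => /=; try by rewrite !mulr0 addr0.
  exact: hf.
rewrite big_split /= -!mulr_sumr !sum_ind_card.
have h1 := hB k; have h2 := hB (k+1).
have e1 : (#|[set p | c k p]|%:R : R) <= g%:R.
  by rewrite ler_nat -card_cl.
have e2 : (#|[set p | c (k+1) p]|%:R : R) <= g%:R by rewrite ler_nat -card_cl.
rewrite [leRHS](_ : _ = (1 - v) * g%:R + v * g%:R); last by rewrite -mulrDl subrK mul1r.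
by apply: lerD; apply: ler_wpM2l => //; rewrite subr_ge0.
Qed.
Definition ccitv (R : realType) (x y : R) : set R := `[x, y]%classic.
Arguments ccitv {R}.

Lemma pair_bound (R : realType) (n : nat) (n0 : (0 < n)%N) (t : R) (i j : nat) (k : int) (v : R)
  (hv : v = n%:R * t + 1 - k%:~R) (v0 : 0 <= v) (v1 : v < 1) :
  (lebesgue_measure (ccitv (Num.max ((i%:R - 1) / n%:R) (t - j%:R / n%:R))%R
                       (Num.min (i%:R / n%:R) (t - (j%:R - 1) / n%:R))%R)
   <= (((1 - v) * (((i + j)%N%:Z == k) : bool)%:R + v * (((i+j)%N%:Z == k+1) : bool)%:R) / n%:R)%R%:E)%E.
Proof.
set x := Num.max _ _; set y := Num.min _ _.
have nr0 : (0 : R) < n%:R by rewrite ltr0n.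
set r := (1 - v) * _ + v * _.
have r0 : 0 <= r by rewrite /r; apply: addr_ge0; apply: mulr_ge0 => //; lra.
rewrite /ccitv lebesgue_measure_itv /=.
case: ifP => _; last by rewrite lee_fin divr_ge0 // ltW.
rewrite -EFinD lee_fin ler_pdivlMr //.
have nz : n%:R != 0 :> R by rewrite pnatr_eq0 -lt0n.
have dK a : a / n%:R * n%:R = a := divfK nz a.
have M p q : p <= q -> p * n%:R <= q * n%:R := fun h => ler_wpM2r (ltW nr0) h.
have h1 : y * n%:R <= i%:R by rewrite -[X in _ <= X](dK i%:R); apply: M; rewrite /y ge_min lexx.
have h2 : y * n%:R <= t * n%:R - (j%:R - 1).
  by rewrite -(dK (j%:R - 1)) -mulrBl; apply: M; rewrite /y ge_min lexx orbT.
have h3 : i%:R - 1 <= x * n%:R by rewrite -[X in X <= _](dK (i%:R - 1)); apply: M; rewrite /x le_max lexx.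
have h4 : t * n%:R - j%:R <= x * n%:R.
  by rewrite -(dK j%:R) -mulrBl; apply: M; rewrite /x le_max lexx orbT.
have eM : ((i + j)%N%:Z)%:~R = i%:R + j%:R :> R by rewrite -natrD.
have tn : t * n%:R = n%:R * t by rewrite mulrC.
rewrite /r.
case E1: ((i + j)%N%:Z == k); case E2: ((i + j)%N%:Z == k + 1).
- by move: E2; rewrite (eqP E1); lia.
- have := congr1 (fun z : int => z%:~R : R) (eqP E1) => /= hk.
  rewrite /= mulr1 mulr0 addr0; lra.
- have := congr1 (fun z : int => z%:~R : R) (eqP E2) => /= hk.
  rewrite intrD /= in hk.
  rewrite /= mulr1 mulr0 add0r; lra.
- rewrite /= !mulr0 addr0.
  have [hk|hk] : ((i + j)%N%:Z <= k - 1)%R \/ (k + 2 <= (i + j)%N%:Z)%R.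
    move/negbT: E1; move/negbT: E2; lia.
  + have hk' : i%:R + j%:R <= k%:~R - 1 :> R.
      by rewrite -eM -[1 : R]/(1%:~R) -intrB ler_int.
    lra.
  + have hk' : k%:~R + 2 <= i%:R + j%:R :> R.
      by rewrite -eM -[2 : R]/(2%:~R) -intrD ler_int.
    lra.
Qed.
Lemma LmeasB (R : realType) (A : set R) : measurable (A : set (measurableTypeR R)) -> Lmeasurable A.
Proof. move=> mA. have := (@sub_caratheodory _ _ _ (@lebesgue_measure R) A (sub_sigma_algebra mA)). by []. Qed.
Lemma lamE (R : realType) (A : set R) : lam A = (@lebesgue_measure R A).
Proof. reflexivity. Qed.
Lemma lam_le (R : realType) (A B : set R) : (A `<=` B)%classic -> (lam A <= lam B)%E.
Proof. move=> AB. exact: (@le_mu_ext _ _ _ (wlength idfun)). Qed.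

Theorem proposition3p1 (R : realType) (g n : nat) :
  (1 <= g)%N -> (g <= n)%N ->
  (Delta ((Rgn g n)%:R / n%:R : R) <= (g%:R / n%:R : R)%:E)%E.
Proof.
move=> g1 gn.
have n0 : (0 < n)%N by apply: leq_trans gn.
have nr0 : (0 : R) < n%:R by rewrite ltr0n.
have nz : n%:R != 0 :> R by rewrite pnatr_eq0 -lt0n.
have dK a : a / n%:R * n%:R = a := divfK nz a.
have Mn p q : p <= q -> p * n%:R <= q * n%:R := fun h => ler_wpM2r (ltW nr0) h.
pose PS := (fun S : {set 'I_n.+1} => `[< (ord0 \notin S) /\ Bstar g S >]).
have hpos : (0 < #|PS|)%N.
  apply/card_gt0P; exists [set x : 'I_n.+1 | false]; rewrite /in_mem /=; apply/asboolP; split; first by rewrite inE.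
  move=> m; rewrite card_cl; apply: (leq_trans _ (leq0n g)); rewrite leqn0 cards_eq0; apply/eqP.
  by apply/setP => p; rewrite !inE.
have [S HS SE] := @eq_bigmax_cond _ PS (fun S => #|S|) hpos.
have RS : Rgn g n = #|S| by rewrite -SE.
move: HS; rewrite /in_mem /= => /asboolP [S0 SB].
pose a := fun i : nat => ((i%:R - 1) / n%:R : R).
pose b := fun i : nat => (i%:R / n%:R : R).
pose F := fun i : 'I_n.+1 => if i \in S then (`[a i, b i[%classic : set R) else set0.
pose A := \big[setU/set0]_(i < n.+1) F i.
have mF i : measurable (F i : set (measurableTypeR R)).
  by rewrite /F; case: ifP => _; [exact: measurable_itv | exact: measurable0].
apply: (@le_trans _ _ (Dsym A)).
  apply: ereal_inf_lbound; exists A => //; split.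
  - by apply: LmeasB; apply: bigsetU_measurable => i _; exact: mF.
  - move=> x Ax; have [i] := @bigsetU_in _ _ F x Ax; rewrite /F; case: ifP => iS //=; rewrite in_itv /= => /andP[h1 h2].
    have i1 : (1 <= i)%N.
      rewrite lt0n; apply/negP => /eqP i0; move: S0; suff -> : ord0 = i by rewrite iS.
      by apply: val_inj.
    have i2 : (i <= n)%N by rewrite -ltnS.
    apply/andP; split.
      apply: le_trans h1; rewrite /a divr_ge0 // ?subr_ge0 ?ler1n // ltW //.
    apply: (lt_le_trans h2); rewrite /b ler_pdivrMr // mul1r ler_nat //.
  - rewrite lamE /A measure_bigsetU_ord //; last first.
      move=> i j _ _ [x [Fi Fj]]; move: Fi Fj; rewrite /F.
      case: ifP => _ //; case: ifP => _ //=; rewrite !in_itv /= => /andP[h1 h2] /andP[h3 h4].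
      have e1 : (i%:R - 1 <= x * n%:R) by rewrite -(dK (i%:R - 1)); exact: Mn.
      have e2 : (x * n%:R < i%:R) by rewrite -ltr_pdivlMr.
      have e3 : (j%:R - 1 <= x * n%:R) by rewrite -(dK (j%:R - 1)); exact: Mn.
      have e4 : (x * n%:R < j%:R) by rewrite -ltr_pdivlMr.
      have f1 : (i%:R < j.+1%:R :> R) by rewrite -natr1; lra.
      have f2 : (j%:R < i.+1%:R :> R) by rewrite -natr1; lra.
      rewrite !ltr_nat !ltnS in f1 f2.
      by apply: val_inj; apply/eqP; rewrite eqn_leq f1 f2.
    have mFE i : lebesgue_measure (F i) = (((i \in S) : bool)%:R / n%:R : R)%:E.
      rewrite /F; case: ifP => _; last by rewrite measure0 mul0r.
      rewrite lebesgue_measure_itv /= lte_fin ifT; last first.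
        by rewrite /a /b ltr_pM2r ?invr_gt0 // ltrBlDr ltrDl.
      by rewrite -EFinD /a /b -mulrBl opprB addrC subrK.
    rewrite (eq_bigr _ (fun i _ => mFE i)) sumEFin -mulr_suml sum_ind_card RS.
    congr ((_ %:R / _)%:E); apply: eq_card => i; by rewrite inE.
apply: ge_ereal_sup => _ [C [_ CA [c Csym]] <-].
pose t := c + c.
pose u := n%:R * t.
pose k := Num.floor (u + 1).
pose v := u + 1 - k%:~R.
have v0 : 0 <= v by rewrite /v subr_ge0 /k floor_le.
have v1 : v < 1.
  have := floorD1_gt (u + 1); rewrite -/k intrD => h; rewrite /v; lra.
pose J := fun i j : nat => if (@inord n i \in S) && (@inord n j \in S) then
   ccitv (Num.max (a i) (t - b j)) (Num.min (b i) (t - a j)) else set0.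
pose Zi := fun i : nat => \big[setU/set0]_(j < n.+1) J i j.
pose Z := \big[setU/set0]_(i < n.+1) Zi i.
have CZ : (C `<=` Z)%classic.
  move=> x Cx.
  have Ax := CA x Cx.
  have Cx' : C (t - x).
    have := (Csym (x - c)).1; rewrite addrC subrK => /(_ Cx).
    by rewrite /t opprB addrA.
  have Ax' := CA _ Cx'.
  have [i] := @bigsetU_in _ _ F x Ax; rewrite /F; case: ifP => iS //=; rewrite in_itv /= => /andP[h1 h2].
  have [j] := @bigsetU_in _ _ F _ Ax'; rewrite /F; case: ifP => jS //=; rewrite in_itv /= => /andP[h3 h4].
  apply: (@in_bigsetU _ _ (fun i : 'I_n.+1 => Zi i) i).
  apply: (@in_bigsetU _ _ (fun j : 'I_n.+1 => J i j) j).
  rewrite /J !inord_val iS jS /= /ccitv /= in_itv /= ge_max !le_min.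
  apply/andP; split; [apply/andP; split|apply/andP; split]; lra.
apply: (le_trans (@lam_le R C Z CZ)); rewrite lamE.
have mJ i j : measurable (J i j : set (measurableTypeR R)).
  by rewrite /J; case: ifP => _; [exact: measurable_itv | exact: measurable0].
have mZi i : measurable (Zi i : set (measurableTypeR R)).
  by apply: bigsetU_measurable => j _; exact: mJ.
have mZ : measurable (Z : set (measurableTypeR R)).
  by apply: bigsetU_measurable => i _; exact: mZi.
apply: (le_trans (@content_subadditive _ _ _ (@lebesgue_measure R) Z Zi n.+1 (fun k _ => mZi k) mZ (@subset_refl _ _))).
pose r := fun i j : nat => (1 - v) * (((i + j)%N%:Z == k) : bool)%:R + v * (((i+j)%N%:Z == k+1) : bool)%:R.
apply: (@le_trans _ _ (\sum_(i < n.+1) \sum_(j < n.+1)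
    ((if (i \in S) && (j \in S) then r i j else 0) / n%:R)%:E)%E).
  apply: lee_sum => i _.
  apply: (le_trans (@content_subadditive _ _ _ (@lebesgue_measure R) (Zi i) (J i) n.+1 (fun k _ => mJ i k) (mZi i) (@subset_refl _ _))).
  apply: lee_sum => j _.
  rewrite /J !inord_val; case: ifP => _; last by rewrite measure0 mul0r.
  by apply: pair_bound.
under eq_bigr do rewrite sumEFin.
rewrite sumEFin lee_fin.
under eq_bigr do rewrite -mulr_suml.
rewrite -mulr_suml; apply: ler_wpM2r; first by rewrite invr_ge0 ltW.
by apply: (@comb R n g S SB k v v0 (ltW v1) (fun i j : 'I_n.+1 => r i j)) => i j _ _.
Qed.
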